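(* Let $\mathcal{A}$ be a finite-dimensional real associative unital algebra with a norm $\|\cdot\|$ satisfying $\|x\star y\|\le m_{\mathcal{A}}\|x\|\|y\|$ for some constant $m_{\mathcal{A}}>0$. If $f(z)=\sum_n c_n\star z^n$ is an entire function on $\mathcal{A}$, then $\limsup_{n\to\infty}\sqrt[n]{\|c_n\|}=0$, and consequently the series for $f$ is uniformly absolutely convergent on $\{z:\|z\|<L\}$ for every $L>0$.
   Context: $f$ entire means the power series $\sum c_n\star z^n$ ($c_n\in\mathcal{A}$) converges for every $z\in\mathcal{A}$. A series of functions $\sum g_n$ is uniformly absolutely convergent on $E$ if it converges absolutely at each point of $E$ and it (and $\sum\|g_n\|$) converges uniformly on $E$. *)

(* Defs.v *)
From HB Require Import structures.
From mathcomp Require Import all_boot all_order all_algebra falgebra.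
From mathcomp Require Import all_classical all_reals all_analysis.
Set Implicit Arguments. Unset Strict Implicit. Unset Printing Implicit Defensive.
Import Order.TTheory GRing.Theory Num.Theory.
Local Open Scope ring_scope.
Local Open Scope classical_set_scope.

Definition is_alg_norm (R : realType) (A : falgType R) (nrm : A -> R) (mA : R) :=
  0 < mA /\
  [/\ forall x, 0 <= nrm x,
      forall x, nrm x = 0 -> x = 0,
      forall x y, nrm (x + y) <= nrm x + nrm y,
      forall (a : R) x, nrm (a *: x) = `|a| * nrm x &
      forall x y, nrm (x * y) <= mA * nrm x * nrm y].

Definition series_converges (R : realType) (V : zmodType) (nv : V -> R)
  (u : nat -> V) :=
  exists s : V, forall e : R, 0 < e -> exists N : nat, forall n : nat,
    (N <= n)%N -> nv (\sum_(k < n) u k - s) < e.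

Definition series_unif_converges (R : realType) (T : Type) (V : zmodType)
  (nv : V -> R) (g : nat -> T -> V) (E : set T) :=
  exists F : T -> V, forall e : R, 0 < e -> exists N : nat, forall n : nat,
    (N <= n)%N -> forall z, E z -> nv (\sum_(k < n) g k z - F z) < e.

Definition unif_abs_converges (R : realType) (T : Type) (V : zmodType)
  (nv : V -> R) (g : nat -> T -> V) (E : set T) :=
  [/\ forall z, E z -> series_converges (fun r : R => `|r|) (fun n => nv (g n z)),
      series_unif_converges nv g E &
      series_unif_converges (fun r : R => `|r|) (fun n z => nv (g n z)) E].

Definition entire_series (R : realType) (A : falgType R) (nrm : A -> R)
  (c : nat -> A) :=
  forall z : A, series_converges nrm (fun n => c n * z ^+ n).

(* Main.v *)
Require Import Defs.
From HB Require Import structures.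
From mathcomp Require Import all_boot all_order all_algebra falgebra.
From mathcomp Require Import all_classical all_reals all_analysis.
From mathcomp Require Import ring lra.
Import Order.TTheory GRing.Theory Num.Theory.
Local Open Scope ring_scope.
Local Open Scope classical_set_scope.

Section Gen.
Variables (R : realType) (V : zmodType) (nv : V -> R).
Hypothesis nv_ge0 : forall x, 0 <= nv x.
Hypothesis nvN : forall x, nv (- x) = nv x.
Hypothesis nvD : forall x y, nv (x + y) <= nv x + nv y.
Hypothesis nv0 : nv 0 = 0.

Lemma nv_sum (u : nat -> V) n m :
  nv (\sum_(n <= k < m) u k) <= \sum_(n <= k < m) nv (u k).
Proof.
apply: (big_ind2 (fun x y => nv x <= y)); first by rewrite nv0.
  by move=> a1 a2 b1 b2 h1 h2; apply: (le_trans (nvD _ _)); apply: lerD.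
by [].
Qed.

Lemma geom_tail (n m : nat) : (n <= m)%N ->
  \sum_(n <= k < m) (2^-1 : R) ^+ k <= 2 * 2^-1 ^+ n.
Proof.
move=> nm.
rewrite (@telescope_sumr_eq _ n m (fun k => - (2 * (2^-1 : R) ^+ k))) //.
  have h2 : (0:R) <= 2^-1 by rewrite invr_ge0.
  rewrite opprK; have := exprn_ge0 m h2; lra.
move=> k _; rewrite exprS mulrA divff ?mul1r; [ring | by rewrite pnatr_eq0].
Qed.

Lemma tail_bound (u : nat -> V) s C :
  (forall e : R, 0 < e -> exists N : nat, forall n : nat,
    (N <= n)%N -> nv (\sum_(k < n) u k - s) < e) ->
  (forall k, nv (u k) <= C * 2^-1 ^+ k) ->
  forall n, nv (\sum_(k < n) u k - s) <= 2 * C * 2^-1 ^+ n.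
Proof.
move=> hs hu n; apply/ler_addgt0Pr => e e0.
have [N HN] := hs e e0.
pose M := maxn N n.
have hM := HN M (leq_maxl _ _).
have nM : (n <= M)%N by apply: leq_maxr.
have -> : \sum_(k < n) u k - s =
   - (\sum_(n <= k < M) u k) + (\sum_(k < M) u k - s).
  rewrite -!(big_mkord xpredT) (big_cat_nat (leq0n n) nM) /=.
  by rewrite addrA addrCA addNr addr0.
apply: (le_trans (nvD _ _)); rewrite nvN; apply: lerD; last exact: ltW.
apply: (le_trans (nv_sum _ _ _)).
apply: (le_trans (y := \sum_(n <= k < M) C * 2^-1 ^+ k)).
  by apply: ler_sum => k _; apply: hu.
rewrite -mulr_sumr.
have C0 : 0 <= C.
  have := le_trans (nv_ge0 (u 0%N)) (hu 0%N); by rewrite expr0 mulr1.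
rewrite -mulrA mulrCA ler_wpM2l // ?geom_tail // ?mulr_ge0 // //=.
Qed.

Lemma term_small (u : nat -> V) s :
  (forall e : R, 0 < e -> exists N : nat, forall n : nat,
    (N <= n)%N -> nv (\sum_(k < n) u k - s) < e) ->
  forall e : R, 0 < e -> exists N : nat, forall n : nat, (N <= n)%N -> nv (u n) < e.
Proof.
move=> hs e e0.
have e20 : 0 < e / 2 by rewrite divr_gt0.
have [N HN] := hs _ e20.
exists N => n Nn.
have -> : u n = (\sum_(k < n.+1) u k - s) + - (\sum_(k < n) u k - s).
  by rewrite big_ord_recr /= opprB addrA addrNK addrC addrA addNr add0r.
apply: (le_lt_trans (nvD _ _)); rewrite nvN.
rewrite (splitr e); apply: ltrD; apply: HN => //; exact: leqW.
Qed.
End Gen.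


Section Main.
Variables (R : realType) (A : falgType R) (nrm : A -> R) (mA : R) (c : nat -> A).
Hypothesis hn : is_alg_norm nrm mA.
Hypothesis hent : entire_series nrm c.

Let mA0 : 0 < mA. Proof. by case: hn. Qed.
Let nrm_ge0 x : 0 <= nrm x. Proof. by case: hn => _ []. Qed.
Let nrmD x y : nrm (x + y) <= nrm x + nrm y. Proof. by case: hn => _ []. Qed.
Let nrmZ (a : R) x : nrm (a *: x) = `|a| * nrm x. Proof. by case: hn => _ []. Qed.
Let nrmM x y : nrm (x * y) <= mA * nrm x * nrm y. Proof. by case: hn => _ []. Qed.
Let nrmN x : nrm (- x) = nrm x.
Proof. by rewrite -scaleN1r nrmZ normrN normr1 mul1r. Qed.
Let nrm0 : nrm 0 = 0.
Proof. by rewrite -(scale0r (0 : A)) nrmZ normr0 mul0r. Qed.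

Lemma coef_small (t : R) : forall e : R, 0 < e -> exists N : nat,
  forall n : nat, (N <= n)%N -> `|t| ^+ n * nrm (c n) < e.
Proof.
have [s hs] := hent (t *: 1).
move=> e e0; have [N HN] := @term_small _ _ nrm nrmN nrmD (fun k => c k * t%:A ^+ k) _ hs _ e0.
exists N => n Nn; have := HN n Nn.
by rewrite exprZn expr1n -scalerAr mulr1 nrmZ normrX.
Qed.


Lemma root_cvg0 : ((fun n : nat => nrm (c n) `^ (n%:R^-1)) : R^nat) @ \oo --> 0.
Proof.
apply/cvgrPdist_lt => e e0.
pose t : R := 2 / e.
have t0 : 0 < t by rewrite divr_gt0.
have [N HN] := @coef_small t 1 ltr01.
exists (maxn N 1) => // n /= Nn.
have nN : (N <= n)%N := leq_trans (leq_maxl _ _) Nn.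
have n1 : (1 <= n)%N := leq_trans (leq_maxr _ _) Nn.
rewrite sub0r normrN ger0_norm ?powR_ge0 //.
have h1 : nrm (c n) <= t^-1 ^+ n.
  have := ltW (HN n nN); rewrite ger0_norm ?(ltW t0) // => h.
  by rewrite exprVn -[_ ^- n]mulr1 ler_pdivlMl ?exprn_gt0.
have h2 : nrm (c n) `^ n%:R^-1 <= t^-1.
  apply: (le_trans (ge0_ler_powR _ _ _ h1)).
  - by rewrite invr_ge0.
  - by rewrite nnegrE.
  - by rewrite nnegrE exprn_ge0 // invr_ge0 ltW.
  have ti : 0 <= t^-1 by rewrite invr_ge0 ltW.
  rewrite -powR_mulrn // -powRrM mulfV ?powRr1 //.
  by rewrite pnatr_eq0 -lt0n.
apply: (le_lt_trans h2).
rewrite /t invf_div.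
rewrite ltr_pdivrMr // ltr_pMr //.
by rewrite ltr1n.
Qed.


Lemma pow_bound z n : nrm (z ^+ n) <= nrm 1 * (mA * nrm z) ^+ n.
Proof.
elim: n => [|n IH]; first by rewrite !expr0 mulr1.
rewrite exprSr; apply: (le_trans (nrmM _ _)).
rewrite exprSr mulrA -[mA * _ * _]mulrA mulrCA.
by apply: ler_wpM2r => //; rewrite mulr_ge0 // ltW.
Qed.

Lemma coef_bound (t : R) : exists B, 0 <= B /\ forall n, `|t| ^+ n * nrm (c n) <= B.
Proof.
have [N HN] := @coef_small t 1 ltr01.
exists (1 + \sum_(k < N) `|t| ^+ k * nrm (c k)); split.
  by rewrite addr_ge0 // sumr_ge0 // => k _; rewrite mulr_ge0 // exprn_ge0.
move=> n; case: (leqP N n) => nN.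
  apply: (le_trans (ltW (HN n nN))).
  by rewrite lerDl sumr_ge0 // => k _; rewrite mulr_ge0 // exprn_ge0.
rewrite (bigD1 (Ordinal nN)) //= addrCA lerDl addr_ge0 // sumr_ge0 // => k _.
by rewrite mulr_ge0 // exprn_ge0.
Qed.


Lemma term_bound L : 0 < L -> exists C, forall n z, nrm z < L ->
  nrm (c n * z ^+ n) <= C * 2^-1 ^+ n.
Proof.
move=> L0.
pose t := 2 * mA * L.
have t0 : 0 < t by rewrite mulr_gt0 // mulr_gt0.
have [B [B0 HB]] := coef_bound t.
exists (mA * nrm 1 * B) => n z zL.
apply: (le_trans (nrmM _ _)).
apply: (le_trans (y := mA * nrm (c n) * (nrm 1 * (mA * L) ^+ n))).
  apply: ler_wpM2l; first by rewrite mulr_ge0 // ltW.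
  apply: (le_trans (pow_bound z n)); apply: ler_wpM2l => //.
  apply: lerXn2r.
  - by rewrite nnegrE mulr_ge0 // ltW.
  - by rewrite nnegrE mulr_ge0 // ltW.
  - by rewrite ler_wpM2l // ltW.
have -> : mA * L = t * 2^-1.
  by rewrite /t; field.
rewrite exprMn; rewrite (ger0_norm (ltW t0)) in HB.
have h := HB n.
have hq : 0 <= (2^-1 : R) ^+ n by rewrite exprn_ge0 // invr_ge0.
have h1 : 0 <= mA * nrm 1 by rewrite mulr_ge0 // ltW.
have -> : mA * nrm (c n) * (nrm 1 * (t ^+ n * 2^-1 ^+ n)) =
          (mA * nrm 1) * (t ^+ n * nrm (c n)) * 2^-1 ^+ n by ring.
by rewrite ler_wpM2r // ler_wpM2l.
Qed.


Lemma geo_small (C e : R) : 0 <= C -> 0 < e ->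
  exists N : nat, forall n, (N <= n)%N -> 2 * C * 2^-1 ^+ n < e.
Proof.
move=> C0 e0.
have q1 : `|(2^-1 : R)| < 1.
  by rewrite ger0_norm ?invr_ge0 // invf_lt1 // ltr1n.
have := cvg_expr q1; move/cvgrPdist_lt.
have d0 : 0 < 2 * C + 1 by rewrite ltr_pwDr // mulr_ge0.
move=> /(_ (e / (2 * C + 1))); rewrite divr_gt0 // => /(_ isT) [N _ HN].
exists N => n Nn; have := HN n Nn; rewrite /= sub0r normrN ger0_norm ?exprn_ge0 ?invr_ge0 //.
rewrite ltr_pdivlMr // mulrC => h.
apply: le_lt_trans h; apply: ler_wpM2r; first by rewrite exprn_ge0 // invr_ge0.
by rewrite lerDl.
Qed.


Lemma main_part1 :
  limn_esup (fun n : nat => ((nrm (c n)) `^ (n%:R^-1))%:E) = 0%E.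
Proof.
have H : (fun n : nat => ((nrm (c n)) `^ (n%:R^-1))%:E) @ \oo --> (0:R)%:E.
  by apply: cvg_EFin; [exact: nearW | exact: root_cvg0].
exact: (cvg_limn_einf_sup H).2.
Qed.

Lemma main_part2 (L : R) : 0 < L ->
  unif_abs_converges nrm (fun n (z : A) => c n * z ^+ n) [set z | nrm z < L].
Proof.
move=> L0; have [C HC] := @term_bound L L0.
have C0 : 0 <= C.
  have := HC 0%N 0; rewrite nrm0 expr0 mulr1 => /(_ L0) h.
  by rewrite expr0 mulr1 in h; exact: le_trans (nrm_ge0 _) h.
have abs_conv : forall z : A, exists l : R, nrm z < L -> forall e : R, 0 < e ->
    exists N : nat, forall n, (N <= n)%N ->
    `|\sum_(k < n) nrm (c k * z ^+ k) - l| < e.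
  move=> z; have [zL|zL] := boolP (nrm z < L); last by exists 0.
  pose P := fun n : nat => \sum_(k < n) nrm (c k * z ^+ k).
  have Pnd : nondecreasing_seq P.
    apply/nondecreasing_seqP => n; rewrite /P big_ord_recr /=.
    by rewrite lerDl.
  have Pub : has_ubound (range P).
    exists (2 * C) => _ [n _ <-].
    rewrite /P -(big_mkord xpredT (fun k => nrm (c k * z ^+ k))).
    apply: (le_trans (y := \sum_(0 <= k < n) C * 2^-1 ^+ k)).
      by apply: ler_sum => k _; apply: HC.
    rewrite -mulr_sumr mulrC ler_wpM2r //.
    by have := @geom_tail R 0 n (leq0n n); rewrite expr0 mulr1.
  have H := nondecreasing_is_cvgn Pnd Pub.
  exists (limn P) => _ e e0.
  move/cvgrPdist_lt: H => /(_ e e0) [N _ HN].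
  by exists N => n Nn; rewrite distrC; apply: HN.
pose F := fun z => proj1_sig (cid (hent z)).
have HF z := proj2_sig (cid (hent z)).
pose G := fun z => proj1_sig (cid (abs_conv z)).
have HG z := proj2_sig (cid (abs_conv z)).
split.
- move=> z zL; exists (G z); exact: HG.
- exists F => e e0.
  have [N HN] := @geo_small C e C0 e0.
  exists N => n Nn z zL.
  apply: le_lt_trans (HN n Nn).
  apply: (@tail_bound _ _ nrm nrm_ge0 nrmN nrmD nrm0 (fun k => c k * z ^+ k)).
    exact: HF.
  by move=> k; apply: HC.
- exists G => e e0.
  have [N HN] := @geo_small C e C0 e0.
  exists N => n Nn z zL.
  apply: le_lt_trans (HN n Nn).
  apply: (@tail_bound _ _ Num.norm (@normr_ge0 _ _) (@normrN _ _) (@ler_normD _ _) (@normr0 _ _) (fun k => nrm (c k * z ^+ k))).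
    exact: HG.
  by move=> k; rewrite ger0_norm //; apply: HC.
Qed.

End Main.

Theorem theorem5p24 (R : realType) (A : falgType R) (nrm : A -> R) (mA : R)
  (c : nat -> A) :
  is_alg_norm nrm mA -> entire_series nrm c ->
  limn_esup (fun n : nat => ((nrm (c n)) `^ (n%:R^-1))%:E) = 0%E /\
  (forall L : R, 0 < L ->
     unif_abs_converges nrm (fun n (z : A) => c n * z ^+ n) [set z | nrm z < L]).
Proof.
move=> hn hent; split; first exact: main_part1 hn hent.
by move=> L L0; apply: main_part2 hn hent L L0.
Qed.
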